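(* Let $\kappa$ be a regular uncountable cardinal and let $\mu,\lambda,\chi,\theta\le\kappa$ be cardinals with $\lambda^{<\chi}<\kappa\le2^\lambda$ and $\lambda^{<\chi}\le\theta^{<\chi}=\theta$. For every coloring $c_1:[\kappa]^2\to\theta$ there exists a coloring $c_0:[\kappa]^2\to\theta$ such that for every partition $p:[\kappa]^2\to\mu$: (1) if $c_1$ witnesses $\mathrm{pr}_1(\kappa,\kappa,\theta,\chi)_p$ then $c_0$ witnesses $\mathrm{pr}_0(\kappa,\kappa,\theta,\chi)_p$; (2) for every cardinal $\nu$, if $c_1$ witnesses $\mathrm{pr}_1(\kappa,\nu\circledast\kappa/1\circledast\kappa,\theta,\chi)_p$ then $c_0$ witnesses $\mathrm{pr}_0(\kappa,\nu\circledast\kappa/1\circledast\kappa,\theta,\chi)_p$.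
   Context: $[\kappa]^2$ denotes the set of pairs $(\alpha,\beta)$ with $\alpha<\beta<\kappa$; a partition is any function $p:[\kappa]^2\to\mu$. For an ordinal $\sigma$, $[\kappa]^\sigma$ is the set of subsets of $\kappa$ of order type $\sigma$; for $a\in[\kappa]^\sigma$ and $i<\sigma$, $a(i)$ is the $i$-th element of $a$; $a<b$ means every element of $a$ is below every element of $b$. Given $p:[\kappa]^2\to\mu$, a coloring $c:[\kappa]^2\to\theta$ witnesses: - $\mathrm{pr}_1(\kappa,\kappa,\theta,\chi)_p$ iff for every ordinal $\sigma<\chi$, every pairwise disjoint $\mathcal A\subseteq[\kappa]^\sigma$ of size $\kappa$ and every $\tau:\mu\to\theta$ there are $a,b\in\mathcal A$, $a<b$, with $c(\alpha,\beta)=\tau(p(\alpha,\beta))$ for all $\alpha\in a,\beta\in b$; - $\mathrm{pr}_0(\kappa,\kappa,\theta,\chi)_p$ iff for every ordinal $\sigma<\chi$, every pairwise disjoint $\mathcal A\subseteq[\kappa]^\sigma$ of size $\kappa$ and every matrix $(\tau_{i,j})_{i,j<\sigma}$ of functions $\mu\to\theta$ there are $a,b\in\mathcal A$, $a<b$, with $c(a(i),b(j))=\tau_{i,j}(p(a(i),b(j)))$ for all $i,j<\sigma$; - $\mathrm{pr}_1(\kappa,\nu\circledast\kappa/1\circledast\kappa,\theta,\chi)_p$ iff for every ordinal $\sigma<\chi$ and every two families $\mathcal A,\mathcal B\subseteq[\kappa]^\sigma$, each pairwise disjoint, with $|\mathcal A|=\nu$, $|\mathcal B|=\kappa$, there is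 $a\in\mathcal A$ such that for every $\tau:\mu\to\theta$ there is $b\in\mathcal B$ with $a<b$ and $c(\alpha,\beta)=\tau(p(\alpha,\beta))$ for all $\alpha\in a,\beta\in b$; - $\mathrm{pr}_0(\kappa,\nu\circledast\kappa/1\circledast\kappa,\theta,\chi)_p$ iff for every ordinal $\sigma<\chi$ and every two families $\mathcal A,\mathcal B\subseteq[\kappa]^\sigma$, each pairwise disjoint, with $|\mathcal A|=\nu$, $|\mathcal B|=\kappa$, there is $a\in\mathcal A$ such that for every matrix $(\tau_{i,j})_{i,j<\sigma}$ of functions $\mu\to\theta$ there is $b\in\mathcal B$ with $a<b$ and $c(a(i),b(j))=\tau_{i,j}(p(a(i),b(j)))$ for all $i,j<\sigma$. *)

(* Defs.v *)
(* cardinals are modelled by types (compared by injections),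
   ordinals below a cardinal by elements of a well-ordered type of that
   cardinality (an initial ordinal). *)
From Stdlib Require Import Relations Wellfounded.

Set Implicit Arguments.

Definition card_le (A B : Type) : Prop := exists f : A -> B, forall x y, f x = f y -> x = y.
Definition card_lt (A B : Type) : Prop := card_le A B /\ ~ card_le B A.
Definition card_eq (A B : Type) : Prop := card_le A B /\ card_le B A.

Definition strict_wo (T : Type) (R : T -> T -> Prop) : Prop :=
  (forall x, ~ R x x) /\ (forall x y z, R x y -> R y z -> R x z) /\
  (forall x y, R x y \/ x = y \/ R y x) /\ well_founded R.

Definition seg (T : Type) (R : T -> T -> Prop) (x : T) : Type := {y : T | R y x}.

Definition is_cardinal (T : Type) (R : T -> T -> Prop) : Prop :=
  strict_wo R /\ forall x : T, card_lt (seg R x) T.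

Definition regular (T : Type) (R : T -> T -> Prop) : Prop :=
  forall S : T -> Prop, card_lt {x : T | S x} T ->
    exists b : T, forall x, S x -> R x b.

Definition uncountable (T : Type) : Prop := ~ card_le T nat.

(* L^{<X} : the set of all functions from some ordinal sigma < chi into L *)
Definition lpow (L X : Type) (RX : X -> X -> Prop) : Type :=
  {s : X & (seg RX s -> L)}.

Section Pr.
Variables (K X M Th : Type) (ltK : K -> K -> Prop) (ltX : X -> X -> Prop).

(* an element of [kappa]^sigma, sigma = ordertype of seg s, presented by its
   increasing enumeration i |-> a(i) *)
Definition incr (s : X) (a : seg ltX s -> K) : Prop :=
  forall i j : seg ltX s, ltX (proj1_sig i) (proj1_sig j) -> ltK (a i) (a j).

(* (A_n)_{n : I} is a pairwise disjoint family in [kappa]^sigma, injectively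
   indexed (so its size is |I|) *)
Definition good_family (I : Type) (s : X) (A : I -> seg ltX s -> K) : Prop :=
  (forall n, incr (A n)) /\
  (forall n m, n <> m -> forall i j, A n i <> A m j) /\
  (forall n m, (forall i, A n i = A m i) -> n = m).

Definition blt (s : X) (a b : seg ltX s -> K) : Prop :=
  forall i j, ltK (a i) (b j).

Definition pr1 (c : K -> K -> Th) (p : K -> K -> M) : Prop :=
  forall (s : X) (A : K -> seg ltX s -> K), good_family A ->
  forall tau : M -> Th, exists n m, blt (A n) (A m) /\
    forall i j, c (A n i) (A m j) = tau (p (A n i) (A m j)).

Definition pr0 (c : K -> K -> Th) (p : K -> K -> M) : Prop :=
  forall (s : X) (A : K -> seg ltX s -> K), good_family A ->
  forall tau : seg ltX s -> seg ltX s -> M -> Th, exists n m, blt (A n) (A m) /\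
    forall i j, c (A n i) (A m j) = tau i j (p (A n i) (A m j)).

Definition pr1nu (N : Type) (c : K -> K -> Th) (p : K -> K -> M) : Prop :=
  forall (s : X) (A : N -> seg ltX s -> K) (B : K -> seg ltX s -> K),
  good_family A -> good_family B ->
  exists n, forall tau : M -> Th, exists m, blt (A n) (B m) /\
    forall i j, c (A n i) (B m j) = tau (p (A n i) (B m j)).

Definition pr0nu (N : Type) (c : K -> K -> Th) (p : K -> K -> M) : Prop :=
  forall (s : X) (A : N -> seg ltX s -> K) (B : K -> seg ltX s -> K),
  good_family A -> good_family B ->
  exists n, forall tau : seg ltX s -> seg ltX s -> M -> Th, exists m, blt (A n) (B m) /\
    forall i j, c (A n i) (B m j) = tau i j (p (A n i) (B m j)).
End Pr.

(* Main.v *)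
Require Import Defs.
From Stdlib Require Import Classical ClassicalEpsilon FunctionalExtensionality ProofIrrelevance List Lia PeanoNat Eqdep FinFun.

Lemma cle_trans A B C : card_le A B -> card_le B C -> card_le A C.
Proof. intros [f Hf] [g Hg]. exists (fun x => g (f x)). auto. Qed.

Lemma cle_refl A : card_le A A.
Proof. exists (fun x => x). auto. Qed.

Definition pick {A} (P : A -> Prop) (h : exists x, P x) : A :=
  proj1_sig (constructive_indefinite_description P h).
Lemma pick_spec {A} (P : A -> Prop) h : P (pick P h).
Proof. unfold pick. exact (proj2_sig _). Qed.

Lemma cle_of_surj A B (f : B -> A) : (forall a, exists b, f b = a) -> card_le A B.
Proof.
  intro H. exists (fun a => pick _ (H a)). intros x y E.
  rewrite <- (pick_spec _ (H x)), <- (pick_spec _ (H y)). now rewrite E.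
Qed.

Fixpoint build {T} (i : inhabited T) (n : nat) : list T :=
  match n with
  | 0 => nil
  | S n => epsilon i (fun x => ~ In x (build i n)) :: build i n
  end.

Lemma fin_or_inf (T : Type) : (exists l : list T, forall x, In x l) \/ card_le nat T.
Proof.
  destruct (classic (exists l : list T, forall x, In x l)) as [H|H]; [now left|right].
  assert (i : inhabited T).
  { apply NNPP; intro Hn. apply H. exists nil. intro x. apply Hn. now constructor. }
  assert (Hnx : forall l : list T, exists x, ~ In x l).
  { intro l. apply NNPP; intro Hn. apply H. exists l. intro x. apply NNPP. intro. apply Hn. eauto. }
  set (g := fun n => epsilon i (fun x => ~ In x (build i n))).
  assert (Hg : forall n, ~ In (g n) (build i n)) by (intro n; exact (epsilon_spec i _ (Hnx _))).
  assert (Hin : forall m n, m < n -> In (g m) (build i n)).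
  { intros m n; induction n; intro Hl; [lia|]. simpl. destruct (Nat.eq_dec m n) as [->|].
    - now left.
    - right. apply IHn. lia. }
  exists g. intros m n E. destruct (Nat.lt_trichotomy m n) as [h|[h|h]]; auto.
  - exfalso. apply (Hg n). rewrite <- E. now apply Hin.
  - exfalso. apply (Hg m). rewrite E. now apply Hin.
Qed.

Lemma nat_not_fin (T : Type) (l : list T) : (forall x, In x l) -> ~ card_le nat T.
Proof.
  intros Hl [f Hf].
  assert (H1 : NoDup (map f (seq 0 (S (length l))))).
  { apply Injective_map_NoDup; [exact Hf| apply seq_NoDup]. }
  assert (H2 : incl (map f (seq 0 (S (length l)))) l) by (intros x _; apply Hl).
  pose proof (NoDup_incl_length H1 H2). rewrite length_map, length_seq in H. lia.
Qed.

Definition lex2 {A B} (RA : A -> A -> Prop) (RB : B -> B -> Prop) (p q : A * B) : Prop :=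
  RA (fst p) (fst q) \/ (fst p = fst q /\ RB (snd p) (snd q)).

Lemma wf_lex2 {A B} (RA : A -> A -> Prop) (RB : B -> B -> Prop) :
  well_founded RA -> well_founded RB -> well_founded (lex2 RA RB).
Proof.
  intros wa wb [a b]. revert b. induction (wa a) as [a _ IHa]. intro b.
  induction (wb b) as [b _ IHb]. constructor. intros [a' b'] [H|[E H]]; simpl in *.
  - now apply IHa.
  - subst. now apply IHb.
Qed.

Lemma embed (P W : Type) (G : P -> P -> Prop) (i : inhabited W) :
  well_founded G -> (forall p q, p <> q -> G p q \/ G q p) ->
  (forall p, ~ card_le W {q | G q p}) -> card_le P W.
Proof.
  intros wf tot Hs.
  set (F := fun (p : P) (rec : forall q, G q p -> W) =>
              epsilon i (fun w => forall q (h : G q p), rec q h <> w)).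
  set (f := Fix wf (fun _ => W) F).
  assert (Hf : forall p, f p = F p (fun q _ => f q)).
  { intro p. unfold f. apply (Fix_eq wf (fun _ => W) F). intros x r1 r2 E. unfold F.
    assert (r1 = r2) as -> by (apply functional_extensionality_dep; intro q;
      apply functional_extensionality; intro h; apply E). reflexivity. }
  assert (Hspec : forall p q, G q p -> f q <> f p).
  { intros p.
    assert (Hex : exists w : W, forall q (h : G q p), f q <> w).
    { apply NNPP; intro Hn. apply (Hs p).
      apply (cle_of_surj _ _ (fun z : {q | G q p} => f (proj1_sig z))).
      intro w. apply NNPP; intro Hw. apply Hn. exists w. intros q h E. apply Hw.
      exists (exist _ q h). exact E. }
    pose proof (epsilon_spec i (fun w => forall q (h : G q p), f q <> w) Hex) as HH.
    rewrite (Hf p). unfold F. intros q h. exact (HH q h). }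
  exists f. intros p q E. apply NNPP; intro Hne. destruct (tot p q Hne) as [h|h].
  - exact (Hspec q p h E).
  - exact (Hspec p q h (eq_sym E)).
Qed.

Lemma sig_eq {A} {P : A -> Prop} (x y : sig P) : proj1_sig x = proj1_sig y -> x = y.
Proof. destruct x, y; simpl; intro; subst; f_equal; apply proof_irrelevance. Qed.

Lemma cle_prod A A' B B' : card_le A A' -> card_le B B' -> card_le (A * B) (A' * B').
Proof.
  intros [f Hf] [g Hg]. exists (fun p => (f (fst p), g (snd p))).
  intros [a b] [c d] E. injection E; intros. simpl in *. f_equal; auto.
Qed.

Lemma wf_inv {A B} (R : B -> B -> Prop) (f : A -> B) :
  well_founded R -> well_founded (fun x y => R (f x) (f y)).
Proof.
  intros wf a. assert (H : forall b, Acc R b -> forall a, f a = b -> Acc (fun x y => R (f x) (f y)) a).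
  { intros b Hb. induction Hb as [b _ IH]. intros a0 E. constructor. intros y Hy.
    apply (IH (f y)); [rewrite <- E; exact Hy | reflexivity]. }
  now apply (H (f a) (wf (f a))).
Qed.

Definition mx {X} (ltX : X -> X -> Prop) (a b : X) : X :=
  if excluded_middle_informative (ltX a b) then b else a.

Lemma hess (X : Type) (ltX : X -> X -> Prop) (HX : strict_wo ltX) :
  forall t, card_le nat (seg ltX t) -> card_le (seg ltX t * seg ltX t) (seg ltX t).
Proof.
  destruct HX as [irr [trans [tri wf]]].
  intro t. induction t as [t IH] using (well_founded_induction wf). intro Hinf.
  assert (incl : forall t', ltX t' t -> card_le (seg ltX t') (seg ltX t)).
  { intros t' h. exists (fun y => exist _ (proj1_sig y) (trans _ _ _ (proj2_sig y) h)).
    intros y z E. apply sig_eq. exact (f_equal (@proj1_sig _ _) E). }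
  destruct (classic (exists t', ltX t' t /\ card_le (seg ltX t) (seg ltX t'))) as [[t' [Ht' Hle]] | HB].
  { eapply cle_trans; [apply (cle_prod _ _ _ _ Hle Hle)|].
    eapply cle_trans; [apply (IH t' Ht' (cle_trans _ _ _ Hinf Hle))|]. now apply incl. }
  set (key := fun p : seg ltX t * seg ltX t =>
         (mx ltX (proj1_sig (fst p)) (proj1_sig (snd p)), (proj1_sig (fst p), proj1_sig (snd p)))).
  set (G := fun p q => lex2 ltX (lex2 ltX ltX) (key p) (key q)).
  assert (mx_le : forall a b, (ltX a (mx ltX a b) \/ a = mx ltX a b) /\ (ltX b (mx ltX a b) \/ b = mx ltX a b)).
  { intros a b. unfold mx. destruct (excluded_middle_informative (ltX a b)); split; auto.
    destruct (tri a b) as [h|[h|h]]; auto. contradiction. }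
  assert (mx_in : forall a b, mx ltX a b = a \/ mx ltX a b = b).
  { intros a b. unfold mx. destruct (excluded_middle_informative (ltX a b)); auto. }
  assert (inhW : inhabited (seg ltX t)) by (destruct Hinf as [g _]; exact (inhabits (g 0))).
  apply (embed _ _ G inhW).
  - unfold G. apply (wf_inv _ key). apply wf_lex2; [exact wf| apply wf_lex2; exact wf].
  - intros [a b] [c d] Hne. unfold G, lex2, key; simpl.
    destruct (tri (mx ltX (proj1_sig a) (proj1_sig b)) (mx ltX (proj1_sig c) (proj1_sig d))) as [h|[h|h]];
    [left; left; exact h| | right; left; exact h].
    destruct (tri (proj1_sig a) (proj1_sig c)) as [h1|[h1|h1]];
    [left; right; split; [exact h| left; exact h1]| | right; right; split; [congruence| left; exact h1]].
    destruct (tri (proj1_sig b) (proj1_sig d)) as [h2|[h2|h2]];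
    [left; right; split; [exact h| right; split; [exact h1| exact h2]]| |
     right; right; split; [congruence| right; split; [congruence| exact h2]]].
    exfalso. apply Hne. f_equal; apply sig_eq; auto.
  - intros [a b] Hle. set (m := mx ltX (proj1_sig a) (proj1_sig b)).
    assert (Hm : ltX m t) by (destruct (mx_in (proj1_sig a) (proj1_sig b)) as [e|e]; unfold m; rewrite e; apply proj2_sig).
    set (Cm := {y : X | ltX y m \/ y = m}).
    assert (Hi : card_le {q | G q (a, b)} (Cm * Cm)).
    { assert (Hq : forall q, G q (a, b) -> (ltX (proj1_sig (fst q)) m \/ proj1_sig (fst q) = m) /\
                                       (ltX (proj1_sig (snd q)) m \/ proj1_sig (snd q) = m)).
      { intros [c d] Hq. unfold G, lex2, key in Hq; simpl in Hq.
        assert (Hmq : ltX (mx ltX (proj1_sig c) (proj1_sig d)) m \/ mx ltX (proj1_sig c) (proj1_sig d) = m)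
          by (destruct Hq as [h|[h _]]; auto).
        assert (lt_le : forall x y z, ltX x y \/ x = y -> ltX y z \/ y = z -> ltX x z \/ x = z).
        { intros x y z [h1|h1] [h2|h2]; subst; eauto. }
        destruct (mx_le (proj1_sig c) (proj1_sig d)) as [Hc Hd]. simpl.
        split; eapply lt_le; eauto. }
      exists (fun z => (exist (fun y => ltX y m \/ y = m) _ (proj1 (Hq _ (proj2_sig z))),
                        exist (fun y => ltX y m \/ y = m) _ (proj2 (Hq _ (proj2_sig z))))).
      intros [[c d] h] [[c' d'] h'] E. injection E; intros E2 E1. apply sig_eq; simpl.
      f_equal; apply sig_eq; auto. }
    assert (Hn : card_le nat (Cm * Cm)) by (eapply cle_trans; [exact Hinf| eapply cle_trans; [exact Hle|exact Hi]]).
    destruct (fin_or_inf Cm) as [[l Hl] | HCm].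
    { apply (nat_not_fin _ (list_prod l l)); [| exact Hn].
      intros [x y]. apply in_prod; apply Hl. }
    destruct (classic (exists y, ltX m y /\ ltX y t)) as [[y [Hy1 Hy2]] | Hno].
    { assert (Cy : card_le Cm (seg ltX y)).
      { exists (fun z => exist _ (proj1_sig z) (match proj2_sig z with
                | or_introl h => trans _ _ _ h Hy1 | or_intror e => eq_ind_r (fun u => ltX u y) Hy1 e end)).
        intros z z' E. apply sig_eq. exact (f_equal (@proj1_sig _ _) E). }
      apply HB. exists y. split; [exact Hy2|].
      eapply cle_trans; [exact Hle|]. eapply cle_trans; [exact Hi|].
      eapply cle_trans; [exact (cle_prod _ _ _ _ Cy Cy)|].
      apply IH; [exact Hy2|]. eapply cle_trans; [exact HCm| exact Cy]. }
    assert (StCm : card_le (seg ltX t) Cm).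
    { assert (Hp : forall z : seg ltX t, ltX (proj1_sig z) m \/ proj1_sig z = m).
      { intro z. destruct (tri (proj1_sig z) m) as [h|[h|h]]; auto. exfalso. apply Hno. exists (proj1_sig z).
        split; [exact h| apply proj2_sig]. }
      exists (fun z => exist (fun y => ltX y m \/ y = m) _ (Hp z)).
      intros z z' E. apply sig_eq. exact (f_equal (@proj1_sig _ _) E). }
    destruct (fin_or_inf (seg ltX m)) as [[l Hl] | Hsm].
    { apply (nat_not_fin Cm (exist (fun y => ltX y m \/ y = m) m (or_intror eq_refl) ::
              map (fun z : seg ltX m => exist (fun y => ltX y m \/ y = m) (proj1_sig z) (or_introl (proj2_sig z))) l)); [|exact HCm].
      intros [z [hz|hz]].
      - right. apply in_map_iff. exists (exist _ z hz). split; [apply sig_eq; reflexivity| apply Hl].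
      - left. apply sig_eq. simpl. auto. }
    destruct Hsm as [g0 Hg0].
    assert (Hne : g0 0 <> g0 1) by (intro E; discriminate (Hg0 _ _ E)).
    assert (CmP : card_le Cm (seg ltX m * seg ltX m)).
    { exists (fun z => match excluded_middle_informative (ltX (proj1_sig z) m) with
                 | left h => (exist _ (proj1_sig z) h, g0 0) | right _ => (g0 0, g0 1) end).
      intros z z' E. destruct (excluded_middle_informative (ltX (proj1_sig z) m)) as [h|h];
        destruct (excluded_middle_informative (ltX (proj1_sig z') m)) as [h'|h']; pose proof (f_equal fst E) as E1; pose proof (f_equal snd E) as E2; simpl in E1, E2.
      - apply sig_eq. exact (f_equal (@proj1_sig _ _) E1).
      - exfalso. apply Hne. congruence.
      - exfalso. apply Hne. congruence.
      - apply sig_eq. destruct (proj2_sig z) as [q|q]; [contradiction|].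
        destruct (proj2_sig z') as [q'|q']; [contradiction|]. congruence. }
    apply HB. exists m. split; [exact Hm|].
    eapply cle_trans; [exact StCm|]. eapply cle_trans; [exact CmP|].
    apply IH; [exact Hm| exists g0; exact Hg0].
Qed.

Lemma pigeon (K : Type) (ltK : K -> K -> Prop) (HK : is_cardinal ltK) (Hreg : regular ltK)
  (C : Type) (f : K -> C) : ~ card_le K C -> exists c, card_le K {n | f n = c}.
Proof.
  intro HC. destruct HK as [[irr [trans [tri wf]]] Hseg].
  apply NNPP; intro H.
  assert (Hb : forall c, exists b, forall x, f x = c -> ltK x b).
  { intro c. apply Hreg. split.
    - exists (@proj1_sig _ _). intros; now apply sig_eq.
    - intro Hc. apply H. now exists c. }
  set (bnd := fun c => pick _ (Hb c)).
  assert (Hbnd : forall x, ltK x (bnd (f x))) by (intro x; exact (pick_spec _ (Hb (f x)) x eq_refl)).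
  destruct (Hreg (fun x => exists c, x = bnd c)) as [B HB].
  { split.
    - exists (@proj1_sig _ _). intros; now apply sig_eq.
    - intro Hc. apply HC. eapply cle_trans; [exact Hc|].
      exists (fun z : {x : K | exists c : C, x = bnd c} => pick (fun c => proj1_sig z = bnd c) (proj2_sig z)).
      intros z z' E. apply sig_eq.
      rewrite (pick_spec (fun c => proj1_sig z = bnd c) (proj2_sig z)),
        (pick_spec (fun c => proj1_sig z' = bnd c) (proj2_sig z')). now rewrite E. }
  destruct (Hseg B) as [_ Hn]. apply Hn.
  exists (fun n => exist _ n (trans _ _ _ (Hbnd n) (HB _ (ex_intro _ (f n) eq_refl)))).
  intros x y E. exact (f_equal (@proj1_sig _ _) E).
Qed.

Lemma small_prod (K : Type) (ltK : K -> K -> Prop) (HK : is_cardinal ltK) (Hreg : regular ltK)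
  A B : ~ card_le K A -> ~ card_le K B -> ~ card_le K (A * B).
Proof.
  intros HA HB [g Hg]. destruct (pigeon K ltK HK Hreg A (fun n => fst (g n)) HA) as [a Ha].
  apply HB. eapply cle_trans; [exact Ha|].
  exists (fun z => snd (g (proj1_sig z))). intros [x hx] [y hy] E. simpl in *. apply sig_eq; simpl.
  apply Hg. destruct (g x), (g y). simpl in *. congruence.
Qed.

Lemma small_inj (K A B : Type) : card_le A B -> ~ card_le K B -> ~ card_le K A.
Proof. intros H1 H2 H3. apply H2. eapply cle_trans; eauto. Qed.

Lemma small_vec (K : Type) (ltK : K -> K -> Prop) (HK : is_cardinal ltK) (Hreg : regular ltK)
  (Hunc : uncountable K) (Z : Type) (z0 : Z) : ~ card_le K Z ->
  forall n, ~ card_le K {ls : list Z | length ls = n}.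
Proof.
  intros HZ n. induction n.
  - apply (small_inj _ _ nat); [|exact Hunc]. exists (fun _ => 0). intros [x hx] [y hy] _.
    apply sig_eq; simpl. destruct x, y; simpl in *; try discriminate. reflexivity.
  - apply (small_inj _ _ (Z * {ls : list Z | length ls = n})); [| now apply small_prod with ltK].
    assert (hd_tl : forall ls : {ls : list Z | length ls = S n}, length (tl (proj1_sig ls)) = n).
    { intros [l hl]. destruct l; simpl in *; [discriminate| now injection hl]. }
    exists (fun ls => (hd z0 (proj1_sig ls), exist (fun l => length l = n) _ (hd_tl ls))).
    intros [x hx] [y hy] E. apply sig_eq; simpl.
    pose proof (f_equal fst E) as E1. pose proof (f_equal (fun p => proj1_sig (snd p)) E) as E2.
    simpl in *. destruct x, y; simpl in *; try discriminate. congruence.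
Qed.

Lemma small_fin_fun (K : Type) (ltK : K -> K -> Prop) (HK : is_cardinal ltK) (Hreg : regular ltK)
  (Hunc : uncountable K) (T Z : Type) (z0 : Z) (l : list T) : (forall x, In x l) ->
  ~ card_le K Z -> ~ card_le K (T -> Z).
Proof.
  intros Hl HZ. apply (small_inj _ _ {ls : list Z | length ls = length l});
    [| apply (small_vec K ltK HK Hreg Hunc Z z0 HZ)].
  exists (fun g => exist _ (map g l) (length_map g l)). intros g g' E.
  pose proof (f_equal (@proj1_sig _ _) E) as E'. simpl in E'.
  apply functional_extensionality. intro x. apply (proj1 (@map_ext_in_iff _ _ g g' l) E'); auto.
Qed.

Lemma small_inf_fun (K T V : Type) (v0 : V) : card_le (T * T) T ->
  ~ card_le K (T -> V) -> ~ card_le K (T -> T -> V).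
Proof.
  intros [h Hh] HV. apply (small_inj _ _ (T -> V)); [|exact HV].
  exists (fun g t => match excluded_middle_informative (exists p, h p = t) with
                 | left ex => g (fst (pick _ ex)) (snd (pick _ ex)) | right _ => v0 end).
  intros g g' E. apply functional_extensionality; intro i; apply functional_extensionality; intro j.
  pose proof (f_equal (fun F => F (h (i, j))) E) as E'. simpl in E'.
  destruct (excluded_middle_informative (exists p, h p = h (i, j))) as [ex|ne].
  - pose proof (pick_spec _ ex) as Hp. apply Hh in Hp. rewrite Hp in E'. exact E'.
  - exfalso. apply ne. eauto.
Qed.

Lemma two_L (K L : Type) : uncountable K -> card_le K (L -> bool) -> exists l0 l1 : L, l0 <> l1.
Proof.
  intros Hu HK. apply NNPP; intro H. apply Hu. eapply cle_trans; [exact HK|].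
  exists (fun f => if excluded_middle_informative (exists l, f l = true) then 1 else 0).
  intros f g E. apply functional_extensionality; intro x.
  assert (Heq : forall a b : L, a = b) by (intros a b; apply NNPP; intro; apply H; eauto).
  destruct (excluded_middle_informative (exists l, f l = true)) as [[l hl]|hf];
  destruct (excluded_middle_informative (exists l, g l = true)) as [[l' hl']|hg]; try discriminate.
  - rewrite (Heq x l) at 1. rewrite (Heq x l'). congruence.
  - destruct (f x) eqn:E1; [exfalso; eauto|]. destruct (g x) eqn:E2; [exfalso; eauto|]. reflexivity.
Qed.

Lemma inhK (K : Type) : uncountable K -> inhabited K.
Proof.
  intro Hu. apply NNPP; intro H. apply Hu. exists (fun k => match H (inhabits k) with end).
  intros x. destruct (H (inhabits x)).
Qed.

Lemma good_sub (K X : Type) (ltK : K -> K -> Prop) (ltX : X -> X -> Prop) (I J : Type) (s : X)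
  (A : I -> seg ltX s -> K) (r : J -> I) : (forall x y, r x = r y -> x = y) ->
  good_family ltK A -> good_family ltK (fun n => A (r n)).
Proof.
  intros Hr [H1 [H2 H3]]. split; [|split].
  - intro n. apply H1.
  - intros n m Hnm. apply H2. intro E. apply Hnm. auto.
  - intros n m E. apply Hr. apply H3. exact E.
Qed.

Lemma incr_inj (K X : Type) (ltK : K -> K -> Prop) (ltX : X -> X -> Prop) (s : X)
  (HKi : forall x, ~ ltK x x) (HXt : forall x y, ltX x y \/ x = y \/ ltX y x)
  (a : seg ltX s -> K) : incr ltK a -> forall i j, a i = a j -> i = j.
Proof.
  intros Ha i j E. destruct (HXt (proj1_sig i) (proj1_sig j)) as [h|[h|h]].
  - exfalso. apply (HKi (a i)). pattern (a i) at 2. rewrite E. now apply Ha.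
  - now apply sig_eq.
  - exfalso. apply (HKi (a i)). pattern (a i) at 1. rewrite E. now apply Ha.
Qed.

Definition okP {K L S : Type} (e : K -> L -> bool) (d : S -> S -> L * bool) (al : K) (i : S) : Prop :=
  forall j, j <> i -> e al (fst (d i j)) = snd (d i j).

Definition data {K L S : Type} (e : K -> L -> bool) (iL : inhabited L) (a : S -> K) : S -> S -> L * bool :=
  fun i j => let x := epsilon iL (fun x => i <> j -> e (a i) x <> e (a j) x) in (x, e (a i) x).

Lemma data_ok {K L S : Type} (e : K -> L -> bool) (iL : inhabited L) (a : S -> K) i : okP e (data e iL a) (a i) i.
Proof. intros j _. reflexivity. Qed.

Lemma data_uniq {K L S : Type} (e : K -> L -> bool) (iL : inhabited L) (a : S -> K) :
  (forall x y, e x = e y -> x = y) -> (forall i j, a i = a j -> i = j) ->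
  forall k i, okP e (data e iL a) (a k) i -> i = k.
Proof.
  intros He Ha k i H. apply NNPP; intro Hne. specialize (H k (fun E => Hne (eq_sym E))).
  unfold data in H; simpl in H.
  assert (Hex : exists x, i <> k -> e (a i) x <> e (a k) x).
  { apply NNPP; intro Hn. apply Hne. apply Ha. apply He. apply functional_extensionality; intro x.
    apply NNPP; intro Hx. apply Hn. exists x. intros _. exact Hx. }
  pose proof (epsilon_spec iL _ Hex Hne) as Hs. apply Hs. symmetry. exact H.
Qed.

Lemma existT_inj2 {A} {P : A -> Type} (x : A) (u v : P x) : existT P x u = existT P x v -> u = v.
Proof. apply Eqdep.EqdepTheory.inj_pair2. Qed.

Theorem theorem4p1
  (K : Type) (ltK : K -> K -> Prop)      (* kappa *)
  (M L Th : Type)                        (* mu, lambda, theta *)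
  (X : Type) (ltX : X -> X -> Prop)      (* chi *)
  (HK : is_cardinal ltK) (Hreg : regular ltK) (Hunc : uncountable K)
  (HX : is_cardinal ltX)
  (HM : card_le M K) (HL : card_le L K) (HXK : card_le X K) (HTh : card_le Th K)
  (H1 : card_lt (lpow L ltX) K) (H2 : card_le K (L -> bool))
  (H3 : card_le (lpow L ltX) (lpow Th ltX)) (H4 : card_eq (lpow Th ltX) Th) :
  forall c1 : K -> K -> Th, exists c0 : K -> K -> Th,
    forall p : K -> K -> M,
      (pr1 ltK ltX c1 p -> pr0 ltK ltX c0 p) /\
      (forall N : Type, pr1nu ltK ltX N c1 p -> pr0nu ltK ltX N c0 p).
Proof.
  intro c1.
  pose proof HK as [[irrK [transK [triK wfK]]] HsegK].
  pose proof HX as [HXwo _]. pose proof HXwo as [irrX [transX [triX wfX]]].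
  destruct (inhK K Hunc) as [k0].
  destruct (classic (exists s2 (u v : seg ltX s2), u <> v)) as [[s2 [u [v Huv]]] | Hdeg].
  2:{ exists c1. intro p.
      assert (Hsub : forall s (i j : seg ltX s), i = j).
      { intros s i j. apply NNPP; intro. apply Hdeg. eauto. }
      split.
      - intros Hpr1 s A HA tau. destruct (classic (inhabited (seg ltX s))) as [[i0]|ni].
        + destruct (Hpr1 s A HA (tau i0 i0)) as [n [m [Hb Hc]]]. exists n, m. split; auto.
          intros i j. rewrite (Hsub s i i0), (Hsub s j i0). apply Hc.
        + destruct (Hpr1 s A HA (fun _ => c1 k0 k0)) as [n [m [Hb _]]]. exists n, m. split; auto.
          intros i. exfalso. exact (ni (inhabits i)).
      - intros N Hpr1 s A B HA HB. destruct (Hpr1 s A B HA HB) as [n Hn]. exists n. intro tau.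
        destruct (classic (inhabited (seg ltX s))) as [[i0]|ni].
        + destruct (Hn (tau i0 i0)) as [m [Hb Hc]]. exists m. split; auto.
          intros i j. rewrite (Hsub s i i0), (Hsub s j i0). apply Hc.
        + destruct (Hn (fun _ => c1 k0 k0)) as [m [Hb _]]. exists m. split; auto.
          intros i. exfalso. exact (ni (inhabits i)). }
  destruct H2 as [e He].
  destruct (two_L K L Hunc (ex_intro _ e He)) as [l0 [l1 Hl01]].
  assert (iL : inhabited L) by exact (inhabits l0).
  destruct H3 as [j3 Hj3]. destruct H4 as [[j4 Hj4] _].
  assert (smL : forall s, ~ card_le K (seg ltX s -> L)).
  { intro s. apply (small_inj _ _ (lpow L ltX)); [|exact (proj2 H1)].
    exists (fun g => existT (fun s0 => seg ltX s0 -> L) s g). intros g g' E. exact (existT_inj2 _ _ _ E). }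
  assert (smZ : forall s, ~ card_le K (seg ltX s -> L * bool)).
  { intro s. apply (small_inj _ _ ((seg ltX s -> L) * (seg ltX s -> L)));
      [| apply small_prod with ltK; auto].
    exists (fun g : seg ltX s -> L * bool => ((fun i => fst (g i)), (fun i => if snd (g i) then l1 else l0))).
    intros g g' E. apply functional_extensionality; intro i.
    pose proof (f_equal (fun q => fst q i) E) as E1. pose proof (f_equal (fun q => snd q i) E) as E2.
    simpl in E1, E2. destruct (g i) as [x b], (g' i) as [x' b']; simpl in *.
    destruct b, b'; congruence. }
  assert (smD : forall s, ~ card_le K (seg ltX s -> seg ltX s -> L * bool)).
  { intro s. destruct (fin_or_inf (seg ltX s)) as [[l Hl]|Hinf].
    - apply (small_fin_fun K ltK HK Hreg Hunc _ _ (fun _ => (l0, true)) l Hl (smZ s)).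
    - apply (small_inf_fun K _ _ (l0, true)); [| exact (smZ s)].
      apply (hess X ltX HXwo s Hinf). }
  set (pairTh := fun y z : Th => j4 (existT _ s2 (fun w : seg ltX s2 =>
                   if excluded_middle_informative (w = u) then y else z))).
  assert (pairTh_inj : forall y z y' z', pairTh y z = pairTh y' z' -> y = y' /\ z = z').
  { intros y z y' z' E. apply Hj4 in E. apply existT_inj2 in E. split.
    - pose proof (f_equal (fun F => F u) E) as E1. simpl in E1.
      destruct (excluded_middle_informative (u = u)); [exact E1| congruence].
    - pose proof (f_equal (fun F => F v) E) as E1. simpl in E1.
      destruct (excluded_middle_informative (v = u)); [congruence| exact E1]. }
  set (encL := fun s (g : seg ltX s -> L) => j4 (j3 (existT _ s g))).
  assert (encL_inj : forall s g g', encL s g = encL s g' -> g = g').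
  { intros s g g' E. apply Hj4, Hj3 in E. exact (existT_inj2 _ _ _ E). }
  set (encF := fun s (g : seg ltX s -> Th) => j4 (existT _ s g)).
  assert (encF_inj : forall s g g', encF s g = encF s g' -> g = g').
  { intros s g g' E. apply Hj4 in E. exact (existT_inj2 _ _ _ E). }
  set (encLB := fun s (g : seg ltX s -> L * bool) =>
         pairTh (encL s (fun i => fst (g i))) (encL s (fun i => if snd (g i) then l1 else l0))).
  assert (encLB_inj : forall s g g', encLB s g = encLB s g' -> g = g').
  { intros s g g' E. apply pairTh_inj in E. destruct E as [E1 E2].
    apply encL_inj in E1. apply encL_inj in E2. apply functional_extensionality; intro i.
    pose proof (f_equal (fun F => F i) E1) as F1. pose proof (f_equal (fun F => F i) E2) as F2.
    simpl in F1, F2. destruct (g i) as [x b], (g' i) as [x' b']; simpl in *.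
    destruct b, b'; congruence. }
  set (Code := {s : X & ((seg ltX s -> seg ltX s -> L * bool) * (seg ltX s -> seg ltX s -> L * bool)
                         * (seg ltX s -> seg ltX s -> Th))%type}).
  set (enc := fun z : Code => j4 (existT _ (projT1 z) (fun i =>
                pairTh (encLB _ (fst (fst (projT2 z)) i))
                       (pairTh (encLB _ (snd (fst (projT2 z)) i)) (encF _ (snd (projT2 z) i)))))).
  assert (enc_inj : forall z z', enc z = enc z' -> z = z').
  { intros [s [[dL dR] tb]] [s' [[dL' dR'] tb']] E. apply Hj4 in E.
    pose proof (f_equal (@projT1 _ _) E) as Es. simpl in Es. subst s'.
    apply existT_inj2 in E. simpl in E.
    assert (Hr : forall i, dL i = dL' i /\ dR i = dR' i /\ tb i = tb' i).
    { intro i. pose proof (f_equal (fun F => F i) E) as Ei. simpl in Ei.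
      apply pairTh_inj in Ei. destruct Ei as [Ea Eb]. apply pairTh_inj in Eb. destruct Eb as [Eb Ec].
      apply encLB_inj in Ea. apply encLB_inj in Eb. apply encF_inj in Ec. auto. }
    assert (dL = dL') by (apply functional_extensionality; intro i; apply Hr).
    assert (dR = dR') by (apply functional_extensionality; intro i; apply Hr).
    assert (tb = tb') by (apply functional_extensionality; intro i; apply Hr).
    subst. reflexivity. }
  set (dec := fun y : Th => match excluded_middle_informative (exists z, enc z = y) with
                | left ex => Some (pick _ ex) | right _ => None end).
  assert (dec_enc : forall z, dec (enc z) = Some z).
  { intro z. unfold dec. destruct (excluded_middle_informative (exists z0, enc z0 = enc z)) as [ex|ne].
    - f_equal. apply enc_inj. exact (pick_spec (fun z0 => enc z0 = enc z) ex).
    - exfalso. apply ne. eauto. }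
  set (idx := fun s (d : seg ltX s -> seg ltX s -> L * bool) (al : K) =>
         match excluded_middle_informative (exists i, okP e d al i) with
         | left ex => Some (pick _ ex) | right _ => None end).
  assert (idx_ok : forall s (a : seg ltX s -> K) k, incr ltK a -> idx s (data e iL a) (a k) = Some k).
  { intros s a k Ha. unfold idx.
    destruct (excluded_middle_informative (exists i, okP e (data e iL a) (a k) i)) as [ex|ne].
    - f_equal. apply (data_uniq e iL a He (incr_inj K X ltK ltX s irrK triX a Ha)).
      exact (pick_spec (fun i => okP e (data e iL a) (a k) i) ex).
    - exfalso. apply ne. exists k. apply data_ok. }
  set (c0 := fun al be : K => match dec (c1 al be) with
     | Some z => match idx (projT1 z) (fst (fst (projT2 z))) al, idx (projT1 z) (snd (fst (projT2 z))) be with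
                 | Some i, Some j => snd (projT2 z) i j | _, _ => c1 al be end
     | None => c1 al be end).
  assert (c0_ok : forall s (a b : seg ltX s -> K) tb i j, incr ltK a -> incr ltK b ->
     c1 (a i) (b j) = enc (existT _ s (data e iL a, data e iL b, tb)) -> c0 (a i) (b j) = tb i j).
  { intros s a b tb i j Ha Hb E. unfold c0. rewrite E, dec_enc. simpl.
    rewrite (idx_ok s a i Ha), (idx_ok s b j Hb). reflexivity. }
  exists c0. intro p. split.
  - intros Hpr1 s A HA tau.
    destruct (pigeon K ltK HK Hreg _ (fun n => data e iL (A n)) (smD s)) as [d [hh Hhh]].
    set (A' := fun n => A (proj1_sig (hh n))).
    assert (HA' : good_family ltK A').
    { apply (good_sub K X ltK ltX K K s A (fun n => proj1_sig (hh n))); [|exact HA].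
      intros x y E. apply Hhh. now apply sig_eq. }
    destruct (Hpr1 s A' HA' (fun mu => enc (existT _ s (d, d, fun i j => tau i j mu))))
      as [n [m [Hb Hc]]].
    exists (proj1_sig (hh n)), (proj1_sig (hh m)). split; [exact Hb|]. intros i j.
    apply (c0_ok s (A' n) (A' m) (fun i0 j0 => tau i0 j0 (p (A' n i) (A' m j))) i j);
      [apply HA| apply HA|].
    rewrite Hc. unfold A'. rewrite (proj2_sig (hh n)), (proj2_sig (hh m)). reflexivity.
  - intros N Hpr1 s A B HA HB.
    destruct (pigeon K ltK HK Hreg _ (fun n => data e iL (B n)) (smD s)) as [d [hh Hhh]].
    set (B' := fun n => B (proj1_sig (hh n))).
    assert (HB' : good_family ltK B').
    { apply (good_sub K X ltK ltX K K s B (fun n => proj1_sig (hh n))); [|exact HB].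
      intros x y E. apply Hhh. now apply sig_eq. }
    destruct (Hpr1 s A B' HA HB') as [n Hn]. exists n. intro tau.
    destruct (Hn (fun mu => enc (existT _ s (data e iL (A n), d, fun i j => tau i j mu))))
      as [m [Hb Hc]].
    exists (proj1_sig (hh m)). split; [exact Hb|]. intros i j.
    apply (c0_ok s (A n) (B' m) (fun i0 j0 => tau i0 j0 (p (A n i) (B' m j))) i j);
      [apply HA| apply HB|].
    rewrite Hc. unfold B'. rewrite (proj2_sig (hh m)). reflexivity.
Qed.
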